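(* Let $\Theta$ be a bunch in a projected cone $(E \xrightarrow{Q} K, \gamma)$. Then for any two faces $\gamma_1, \gamma_2 \in \mathrm{cov}(\Theta)$ we have $Q(\gamma_1)^{\circ} \cap Q(\gamma_2)^{\circ} \neq \emptyset$.
   Context: A lattice is a finitely generated free abelian group; for a lattice $E$ put $E_{\mathbb Q} := \mathbb Q \otimes_{\mathbb Z} E$, and a lattice homomorphism is extended $\mathbb Q$-linearly. A cone in $E$ means a convex polyhedral (not necessarily strictly convex) cone in $E_{\mathbb Q}$; $\tau^{\circ}$ denotes the relative interior of a cone $\tau$, $\gamma_0 \preceq \gamma$ means $\gamma_0$ is a face of $\gamma$, and $\mathrm{lin}(\tau)$ is the linear span. A projected cone $(E \xrightarrow{Q} K, \gamma)$ consists of a surjective homomorphism of lattices $Q\colon E \to K$ and a simplicial cone $\gamma \subset E_{\mathbb Q}$ of full dimension. A projected face is a cone $Q(\gamma_0) \subset K_{\mathbb Q}$ with $\gamma_0 \preceq \gamma$. A bunch in $(E \xrightarrow{Q} K,\gamma)$ is a nonempty collection $\Theta$ of projected faces such that a projected face $\tau_0$ belongs to $\Theta$ if and only if $\emptyset \neq \tau_0^{\circ} \cap \tau^{\circ} \neq \tau^{\circ}$ holds for all $\tau \in \Theta$ with $\tau \neq \tau_0$. The covering collection $\mathrm{cov}(\Theta)$ is the set of faces $\gamma_0 \preceq \gamma$ which are minimal (among faces of $\gamma$, with respect to inclusion) with the property that $Q(\gamma_0) \supseteq \tau$ for some $\tau \in \Theta$. *)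

(* Defs.v *)
From HB Require Import structures.
From mathcomp Require Import all_boot all_order all_algebra.
From mathcomp Require Import classical_sets.
Set Implicit Arguments. Unset Strict Implicit. Unset Printing Implicit Defensive.
Import Order.TTheory GRing.Theory Num.Theory.
Local Open Scope ring_scope.
Local Open Scope classical_set_scope.

(* Lattices are modelled as Z^n = 'cV[int]_n, and E_Q as Q^n = 'cV[rat]_n. *)

Definition Qmap (r n : nat) (Q : 'M[int]_(r, n)) : 'cV[rat]_n -> 'cV[rat]_r :=
  fun x => map_mx (fun z : int => z%:~R) Q *m x.

Definition lattice_surj (r n : nat) (Q : 'M[int]_(r, n)) : Prop :=
  forall y : 'cV[int]_r, exists x : 'cV[int]_n, Q *m x = y.

Definition cone_gen (n k : nat) (V : 'M[rat]_(n, k)) : set 'cV[rat]_n :=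
  [set x | exists a : 'cV[rat]_k, (forall i, 0 <= a i 0) /\ x = V *m a].

Definition lin (n : nat) (C : set 'cV[rat]_n) : set 'cV[rat]_n :=
  [set y | exists k (W : 'M[rat]_(n, k)) (c : 'cV[rat]_k),
     (forall j, C (col j W)) /\ y = W *m c].

(* Relative interior of a convex set C containing 0 (interior relative to
   its linear span = affine hull), in the algebraic form. *)
Definition relint (n : nat) (C : set 'cV[rat]_n) : set 'cV[rat]_n :=
  [set x | C x /\ forall y, lin C y -> exists e : rat, 0 < e /\ C (x + e *: y)].

Definition face (n : nat) (C F : set 'cV[rat]_n) : Prop :=
  exists u : 'rV[rat]_n, (forall x, C x -> 0 <= (u *m x) 0 0) /\
    F = [set x | C x /\ (u *m x) 0 0 = 0].

Definition simplicial_full (n : nat) (g : set 'cV[rat]_n) : Prop :=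
  exists V : 'M[rat]_n, V \in unitmx /\ g = cone_gen V.

Definition projected_cone (r n : nat) (Q : 'M[int]_(r, n)) (g : set 'cV[rat]_n) : Prop :=
  lattice_surj Q /\ simplicial_full g.

Definition projected_face (r n : nat) (Q : 'M[int]_(r, n)) (g : set 'cV[rat]_n)
    (t : set 'cV[rat]_r) : Prop :=
  exists g0, face g g0 /\ t = Qmap Q @` g0.

Definition bunch (r n : nat) (Q : 'M[int]_(r, n)) (g : set 'cV[rat]_n)
    (Theta : set (set 'cV[rat]_r)) : Prop :=
  (exists t, Theta t) /\
  (forall t, Theta t -> projected_face Q g t) /\
  (forall t0, projected_face Q g t0 ->
     (Theta t0 <-> forall t, Theta t -> t <> t0 ->
        (relint t0 `&` relint t !=set0) /\ (relint t0 `&` relint t <> relint t))).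

Definition cov (r n : nat) (Q : 'M[int]_(r, n)) (g : set 'cV[rat]_n)
    (Theta : set (set 'cV[rat]_r)) : set (set 'cV[rat]_n) :=
  [set g0 | face g g0 /\ (exists t, Theta t /\ t `<=` Qmap Q @` g0) /\
     forall g1, face g g1 -> g1 `<=` g0 ->
       (exists t, Theta t /\ t `<=` Qmap Q @` g1) -> g1 = g0].

(* Main.v *)
Require Import Defs.
From HB Require Import structures.
From mathcomp Require Import all_boot all_order all_algebra.
From mathcomp Require Import classical_sets.
From mathcomp Require Import ring lra.
From Stdlib Require Import Classical.
Set Implicit Arguments. Unset Strict Implicit. Unset Printing Implicit Defensive.
Import Order.TTheory GRing.Theory Num.Theory.
Local Open Scope ring_scope.
Local Open Scope classical_set_scope.

Definition conesub (m n : nat) (M : 'M[rat]_(m,n)) (S : 'I_n -> bool) : set 'cV[rat]_m :=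
  [set x | exists a : 'cV[rat]_n, (forall i, 0 <= a i 0) /\
     (forall i, ~~ S i -> a i 0 = 0) /\ x = M *m a].

Lemma fin_eps (I : finType) (P : I -> rat -> Prop) :
  (forall i e e', 0 < e' <= e -> P i e -> P i e') ->
  (forall i, exists e, 0 < e /\ P i e) -> exists e, 0 < e /\ forall i, P i e.
Proof.
move=> mono ex.
suff [e [e0 He]] : exists e, 0 < e /\ forall i, i \in enum I -> P i e.
  by exists e; split => // i; apply: He; rewrite mem_enum.
elim: (enum I) => [|j s [e [e0 He]]]; first by exists 1; split.
have [ej [ej0 Hj]] := ex j.
exists (Num.min e ej); split; first by rewrite lt_min e0 ej0.
move=> i; rewrite inE => /orP [/eqP -> | Hs].
  by apply: mono Hj; rewrite lt_min e0 ej0 ge_min lexx orbT.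
by apply: mono (He i Hs); rewrite lt_min e0 ej0 ge_min lexx.
Qed.

Lemma lin_conesub m n (M : 'M[rat]_(m,n)) (S : 'I_n -> bool) y : lin (conesub M S) y ->
  exists c : 'cV[rat]_n, (forall i, ~~ S i -> c i 0 = 0) /\ y = M *m c.
Proof.
case=> k [W [c [HW ->]]].
have /fin_all_exists [f Hf] : forall j : 'I_k, exists a : 'cV[rat]_n,
    (forall i, ~~ S i -> a i 0 = 0) /\ col j W = M *m a.
  by move=> j; have [a [_ [? ?]]] := HW j; exists a.
pose A := \matrix_(i, j) f j i 0.
have -> : W = M *m A.
  apply/matrixP => i j. have [_ e] := Hf j.
  have := congr1 (fun z : 'cV[rat]_m => z i 0) e. rewrite !mxE => ->.
  by apply: eq_bigr => l _; rewrite /A mxE.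
exists (A *m c); split; last by rewrite mulmxA.
move=> i Si; rewrite mxE big1 // => j _; rewrite /A mxE (proj1 (Hf j)) ?mul0r //.
Qed.

Lemma relint_pos m n (M : 'M[rat]_(m,n)) (S : 'I_n -> bool) (a : 'cV[rat]_n) :
  (forall i, S i -> 0 < a i 0) -> (forall i, ~~ S i -> a i 0 = 0) ->
  relint (conesub M S) (M *m a).
Proof.
move=> apos asup.
have a0 : forall i, 0 <= a i 0.
  by move=> i; case Si: (S i); [exact: ltW (apos _ Si) | rewrite asup ?Si].
split; first by exists a.
move=> y /lin_conesub [c [csup ->]].
pose P := fun i e => 0 <= a i 0 + e * c i 0.
have mono : forall i e1 e', 0 < e' <= e1 -> P i e1 -> P i e'.
  rewrite /P => i e1 e' /andP[e'0 e'e] H.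
  have := a0 i; nra.
have ex : forall i, exists e, 0 < e /\ P i e.
  rewrite /P => i; have := a0 i; case: (lerP 0 (c i 0)) => cpos ai.
    by exists 1; split => //; lra.
  have ap : 0 < a i 0.
    case Si: (S i); first exact: apos.
    by move: cpos; rewrite csup ?Si // ltxx.
  exists (a i 0 / (- c i 0)); split; first by rewrite divr_gt0 // oppr_gt0.
  have -> : a i 0 / - c i 0 * c i 0 = - a i 0.
    by field; rewrite lt_eqF.
  by rewrite subrr.
have [e [e0 He]] := fin_eps mono ex.
exists e; split => //; exists (a + e *: c); split.
  by move=> i; rewrite !mxE; exact: He.
split; first by move=> i Si; rewrite !mxE asup // csup // mulr0 addr0.
by rewrite mulmxDr -scalemxAr.
Qed.

Lemma relint_sub_pos m n (M : 'M[rat]_(m,n)) (S : 'I_n -> bool) (t : set 'cV[rat]_m) x :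
  t `<=` conesub M S -> relint t x ->
  (forall i, S i -> ~ (t `<=` conesub M (fun j => S j && (j != i)))) ->
  exists a : 'cV[rat]_n, (forall i, S i -> 0 < a i 0) /\ (forall i, ~~ S i -> a i 0 = 0) /\ x = M *m a.
Proof.
move=> tsub [tx xint] Hmin.
have xc := tsub _ tx.
have /fin_all_exists [D HD] : forall i, exists d : 'cV[rat]_n, (forall j, 0 <= d j 0) /\
    (forall j, ~~ S j -> d j 0 = 0) /\ x = M *m d /\ (S i -> 0 < d i 0).
  move=> i; case Si: (S i); last first.
    by have [d [d0 [dsup ->]]] := xc; exists d.
  have [y Hy] := not_all_ex_not _ _ (Hmin i Si).
  have ty := not_imply_elim _ _ Hy.
  have nyc := not_imply_elim2 _ _ Hy.
  have liny : lin t (- y).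
    exists 1%N, y, (const_mx (-1)); split.
      move=> j; have -> : col j y = y.
        by apply/matrixP => p q; rewrite !mxE !ord1.
      exact: ty.
    apply/matrixP => p q; rewrite !mxE big_ord1 !mxE !ord1; lra.
  have [e [e0 He]] := xint _ liny.
  have [c [c0 [csup ce]]] := tsub _ He.
  have [b [b0 [bsup be]]] := tsub _ ty.
  exists (e *: b + c); split.
    move=> j; rewrite !mxE; apply: addr_ge0 => //; apply: mulr_ge0 => //; exact: ltW.
  split; first by move=> j Sj; rewrite !mxE bsup // csup // mulr0 addr0.
  split.
    rewrite mulmxDr -scalemxAr -be -ce.
    apply/matrixP => p q; rewrite !mxE; lra.
  move=> _; rewrite !mxE.
  have bi : 0 < b i 0.
    rewrite lt_def b0 andbT; apply/negP => /eqP bi0; apply: nyc.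
    exists b; split => //; split => // j.
    rewrite negb_and negbK => /orP [/bsup // | /eqP ->] //.
  have := c0 i; nra.
have [a [a0 [asup [ae apos]]]] : exists a : 'cV[rat]_n, (forall j, 0 <= a j 0) /\
    (forall j, ~~ S j -> a j 0 = 0) /\ x = M *m a /\
    (forall i, i \in enum 'I_n -> S i -> 0 < a i 0).
  elim: (enum 'I_n) => [|j s [a [a0 [asup [ae apos]]]]].
    by have [d [d0 [dsup ->]]] := xc; exists d.
  have [d0 [dsup [de dpos]]] := HD j.
  exists (2^-1 *: (a + D j)); split.
    by move=> k; rewrite !mxE; have := a0 k; have := d0 k; lra.
  split; first by move=> k Sk; rewrite !mxE asup // dsup // addr0 mulr0.
  split.
    rewrite -scalemxAr mulmxDr -ae -de.
    apply/matrixP => p q; rewrite !mxE; lra.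
  move=> i; rewrite inE => /orP [/eqP -> | Hs] Si; rewrite !mxE.
    by have := a0 j; have := dpos Si; lra.
  by have := apos i Hs Si; have := d0 i; lra.
exists a; split => //; move=> i Si; apply: apos => //; by rewrite mem_enum.
Qed.


Lemma face_conesub n (V : 'M[rat]_n) F : face (cone_gen V) F -> exists S, F = conesub V S.
Proof.
case=> u [unn ->].
pose c := u *m V.
have cpos : forall j, 0 <= c 0 j.
  move=> j.
  have H : cone_gen V (V *m delta_mx j 0).
    exists (delta_mx j 0); split => // i; rewrite mxE; case: (_ && _) => //.
  by have := unn _ H; rewrite mulmxA -colE mxE.
exists (fun j => c 0 j == 0).
apply/seteqP; split => x.
  case=> -[a [a0 ->]] ux0; exists a; split => //; split => // j nSj.
  move: ux0; rewrite mulmxA mxE => /psumr_eq0P H.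
  have /eqP := H (fun i _ => mulr_ge0 (cpos i) (a0 i)) j isT.
  by rewrite mulf_eq0 (negbTE nSj) => /eqP.
case=> a [a0 [asup ->]]; split; first by exists a.
rewrite mulmxA mxE big1 // => j _.
case Sj: (c 0 j == 0); first by rewrite (eqP Sj) mul0r.
by rewrite asup ?Sj // mulr0.
Qed.

Lemma conesub_face n (V : 'M[rat]_n) (S : 'I_n -> bool) : V \in unitmx ->
  face (cone_gen V) (conesub V S).
Proof.
move=> Vu.
pose b : 'rV[rat]_n := \row_j (if S j then 0 else 1).
have ub : forall a : 'cV[rat]_n, (b *m invmx V *m (V *m a)) 0 0 = \sum_j (if S j then 0 else 1) * a j 0.
  move=> a; rewrite mulmxA mulmxKV // mxE; apply: eq_bigr => j _; rewrite mxE //.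
have tge : forall a : 'cV[rat]_n, (forall i, 0 <= a i 0) -> forall j, 0 <= (if S j then 0 else 1) * a j 0.
  by move=> a a0 j; case: (S j); rewrite ?mul0r ?mul1r.
exists (b *m invmx V); split.
  case=> x [a [a0 ->]]; rewrite ub; apply: sumr_ge0 => j _; exact: tge.
apply/seteqP; split => x.
  case=> a [a0 [asup ->]]; split; first by exists a.
  rewrite ub big1 // => j _; case Sj: (S j); rewrite ?mul0r // asup ?Sj // mulr0.
case=> -[a [a0 ->]]; rewrite ub => /psumr_eq0P H; exists a; split => //; split => // j nSj.
have := H (fun i _ => tge a a0 i) j isT; rewrite (negbTE nSj) mul1r //.
Qed.

Lemma Qmap_conesub r n (Q : 'M[int]_(r,n)) (V : 'M[rat]_n) S :
  Qmap Q @` conesub V S = conesub (map_mx (fun z : int => z%:~R) Q *m V) S.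
Proof.
apply/seteqP; split => y.
  case=> x [a [a0 [asup ->]]] <-; exists a; split => //; split => //; by rewrite /Qmap mulmxA.
case=> a [a0 [asup ->]]; exists (V *m a); first by exists a.
by rewrite /Qmap mulmxA.
Qed.

Lemma col_conesub n (V : 'M[rat]_n) S i : V \in unitmx -> conesub V S (col i V) -> S i.
Proof.
move=> Vu [a [_ [asup e]]].
rewrite colE in e.
have ea : delta_mx i 0 = a by rewrite -(mulKmx Vu (delta_mx i 0)) e mulKmx.
apply/negPn/negP => nS; have := asup i nS; rewrite -ea mxE !eqxx /= => /eqP.
by rewrite oner_eq0.
Qed.

Lemma conesub_sub n (V : 'M[rat]_n) (S S' : 'I_n -> bool) :
  (forall j, S' j -> S j) -> conesub V S' `<=` conesub V S.
Proof.
move=> HS x [a [a0 [asup ->]]]; exists a; split => //; split => // j nSj.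
apply: asup; apply/negP => /HS; exact/negP.
Qed.

Theorem lemma2p5 (r n : nat) (Q : 'M[int]_(r, n)) (g : set 'cV[rat]_n)
    (Theta : set (set 'cV[rat]_r)) :
  projected_cone Q g -> bunch Q g Theta ->
  forall g1 g2, cov Q g Theta g1 -> cov Q g Theta g2 ->
    relint (Qmap Q @` g1) `&` relint (Qmap Q @` g2) !=set0.
Proof.
move=> [_ [V [Vu ->]]] [_ [Tpf Tbunch]] g1 g2 c1 c2.
set W := map_mx (fun z : int => z%:~R) Q *m V.
have key : forall g0, cov Q (cone_gen V) Theta g0 -> exists S, g0 = conesub V S /\
    exists t, Theta t /\ t `<=` conesub W S /\
   forall i, S i -> ~ (t `<=` conesub W (fun j => S j && (j != i))).
  move=> g0 [fg0 [[t [Tt tsub]] gmin]].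
  have [S E] := face_conesub fg0; subst g0.
  exists S; split => //; exists t; split => //; split; first by rewrite -Qmap_conesub.
  move=> i Si tsub'.
  have sub' : conesub V (fun j => S j && (j != i)) `<=` conesub V S.
    by apply: conesub_sub => j /andP[].
  have E := gmin _ (conesub_face _ Vu) sub'
    (ex_intro _ t (conj Tt (eq_ind_r (fun X => t `<=` X) tsub' (Qmap_conesub _ _ _)))).
  have : conesub V (fun j => S j && (j != i)) (col i V).
    rewrite E; exists (delta_mx i 0); split.
      by move=> j; rewrite mxE; case: (_ && _).
    split; last by rewrite colE.
    by move=> j; rewrite mxE; case: eqP => [-> | //]; rewrite Si eqxx.
  by move=> /(col_conesub Vu); rewrite eqxx andbF.
have [S1 [E1 [t1 [T1 [s1 m1]]]]] := key g1 c1.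
have [S2 [E2 [t2 [T2 [s2 m2]]]]] := key g2 c2.
subst g1 g2.
have [x [x1 x2]] : relint t1 `&` relint t2 !=set0.
  case: (classic (t1 = t2)) => [<- | ne].
    have [g0 [fg0 ->]] := Tpf t1 T1.
    have [T ->] := face_conesub fg0.
    rewrite Qmap_conesub.
    have P := @relint_pos _ _ W T (\col_j (if T j then 1 else 0)).
    exists (W *m \col_j (if T j then 1 else 0)); split; apply: P => j; rewrite mxE;
      by case: (T j).
  by have [] := (proj1 (Tbunch t1 (Tpf t1 T1)) T1) t2 T2 (nesym ne).
exists x; split; rewrite Qmap_conesub.
  have [a [ap [as' ->]]] := relint_sub_pos s1 x1 m1; exact: relint_pos.
have [a [ap [as' ->]]] := relint_sub_pos s2 x2 m2; exact: relint_pos.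
Qed.
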